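(* Let $N\ge0$ be an integer and $\epsilon$ a nonzero real number. The normalized state $$|\tilde N\rangle=\frac{1}{\sqrt{\mathcal N}}\,\frac{\sqrt{N!}}{N+1}\,\frac{e^{\epsilon^2/2}}{\epsilon^N}\sum_{k=0}^N e^{-2\pi i kN/(N+1)}\,\big|\epsilon e^{2\pi i k/(N+1)}\big\rangle,\qquad \mathcal N=N!\sum_{k=0}^\infty\frac{\epsilon^{2k(N+1)}}{(k(N+1)+N)!},$$ a superposition of $N+1$ coherent states, approximates the Fock state $|N\rangle$ with fidelity $$|\langle N|\tilde N\rangle|^2=\frac1{\mathcal N}=1-O\!\left(\frac{N!}{(2N+1)!}\epsilon^{2(N+1)}\right)\quad(\epsilon\to0).$$
   Context: Single-mode Fock basis $\{|n\rangle\}_{n\ge0}$. For $\alpha\in\mathbb C$, the coherent state is $|\alpha\rangle=e^{-|\alpha|^2/2}\sum_{n=0}^\infty\frac{\alpha^n}{\sqrt{n!}}|n\rangle$; Greek letters (and expressions such as $\epsilon e^{2\pi i k/(N+1)}$) inside kets denote coherent states, while $|N\rangle$ is the Fock state with $N$ photons. *)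

(* Defs.v *)
From Stdlib Require Import Reals Factorial.
From Coquelicot Require Import Coquelicot.
Open Scope R_scope.

Definition Cexpi (theta : R) : C := (cos theta, sin theta).

(* Fock-basis amplitude <n|alpha> of the coherent state |alpha>:
   e^{-|alpha|^2/2} alpha^n / sqrt(n!) *)
Definition coherent (alpha : C) (n : nat) : C :=
  (RtoC (exp (- (Cmod alpha) ^ 2 / 2) / sqrt (INR (fact n))) * Cpow alpha n)%C.

Definition normN (N : nat) (eps : R) : R :=
  INR (fact N) *
  Series (fun k => eps ^ (2 * (k * (N + 1))) / INR (fact (k * (N + 1) + N))).

(* Fock-basis amplitudes <n|Ntilde> of the state |Ntilde> *)
Definition Ntilde (N : nat) (eps : R) (n : nat) : C :=
  (RtoC (/ sqrt (normN N eps) * sqrt (INR (fact N)) / INR (N + 1)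
        * exp (eps ^ 2 / 2) / eps ^ N) *
  sum_n (G := C_AbelianMonoid)
    (fun k => Cexpi (- 2 * PI * INR k * INR N / INR (N + 1)) *
              coherent (RtoC eps * Cexpi (2 * PI * INR k / INR (N + 1))) n)%C N)%C.

(* Main.v *)
Require Import Defs.
From Stdlib Require Import Reals Factorial.
From Coquelicot Require Import Coquelicot.
From Stdlib Require Import Arith Lia Lra.
Open Scope R_scope.


Lemma Cexpi_add x y : (Cexpi x * Cexpi y)%C = Cexpi (x+y).
Proof. unfold Cexpi, Cmult. rewrite cos_plus, sin_plus. simpl. f_equal; ring. Qed.

Lemma Cexpi_0 : Cexpi 0 = RtoC 1.
Proof. unfold Cexpi, RtoC. rewrite cos_0, sin_0. reflexivity. Qed.

Lemma Cexpi_pow x n : Cpow (Cexpi x) n = Cexpi (INR n * x).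
Proof.
  induction n as [|n IH]; simpl Cpow.
  - rewrite Rmult_0_l, Cexpi_0. reflexivity.
  - rewrite IH, Cexpi_add, S_INR. f_equal. ring.
Qed.

Lemma Cexpi_per x q : Cexpi (x + INR q * (2*PI)) = Cexpi x.
Proof.
  unfold Cexpi. replace (x + INR q * (2*PI)) with (x + 2 * INR q * PI) by ring.
  rewrite cos_period, sin_period. reflexivity.
Qed.

Lemma Cmod_Cexpi x : Cmod (Cexpi x) = 1.
Proof.
  unfold Cmod, Cexpi. simpl fst; simpl snd.
  replace (cos x ^ 2 + sin x ^ 2) with 1 by (rewrite <- (sin2_cos2 x); unfold Rsqr; ring).
  apply sqrt_1.
Qed.

Lemma Cpow_mult a b n : Cpow (a*b) n = (Cpow a n * Cpow b n)%C.
Proof. induction n as [|n IH]; simpl. ring. rewrite IH. ring. Qed.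

Lemma Cpow_RtoC x n : Cpow (RtoC x) n = RtoC (x^n).
Proof. induction n as [|n IH]; simpl. reflexivity. rewrite IH, RtoC_mult. reflexivity. Qed.

Lemma sumC_scal (c : C) (f : nat -> C) n :
  sum_n (G:=C_AbelianMonoid) (fun k => c * f k)%C n = (c * sum_n (G:=C_AbelianMonoid) f n)%C.
Proof.
  induction n as [|n IH].
  - rewrite !sum_O. reflexivity.
  - rewrite !sum_Sn, IH. change plus with Cplus. simpl. ring.
Qed.

Lemma geom_sumC z n :
  ((z - 1) * sum_n (G:=C_AbelianMonoid) (fun k => Cpow z k) n = Cpow z (S n) - 1)%C.
Proof.
  induction n as [|n IH].
  - rewrite sum_O. simpl. ring.
  - rewrite sum_Sn. change plus with Cplus. simpl.
    rewrite Cmult_plus_distr_l, IH. simpl. ring.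
Qed.

Lemma sum_one n : sum_n (G:=C_AbelianMonoid) (fun k => Cpow (RtoC 1) k) n = RtoC (INR (S n)).
Proof.
  induction n as [|n IH].
  - rewrite sum_O. simpl. reflexivity.
  - rewrite sum_Sn, IH. change plus with Cplus. rewrite Cpow_RtoC, pow1.
    rewrite (S_INR (S n)). rewrite RtoC_plus. reflexivity.
Qed.

Definition phi (N n : nat) := 2 * PI * INR (n mod (N+1) + 1) / INR (N + 1).

Lemma angle N n k :
  (Cexpi (- 2 * PI * INR k * INR N / INR (N + 1)) *
   Cexpi (INR n * (2 * PI * INR k / INR (N + 1))))%C = Cexpi (INR k * phi N n).
Proof.
  rewrite Cexpi_add.
  assert (Hd := Nat.div_mod_eq n (N+1)).
  set (q := (n / (N+1))%nat) in *. set (r := (n mod (N+1))%nat) in *.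
  assert (Hn : INR n = INR q * (INR N + 1) + INR r).
  { rewrite Hd at 1. rewrite plus_INR, mult_INR, plus_INR. simpl. ring. }
  assert (HN : INR N + 1 <> 0).
  { pose proof (pos_INR N). lra. }
  set (th := 2 * PI * (INR n - INR N) / INR (N+1)).
  transitivity (Cexpi (INR k * th)).
  { f_equal. unfold th. rewrite plus_INR. simpl (INR 1). field. auto. }
  rewrite <- !Cexpi_pow. f_equal.
  rewrite <- (Cexpi_per th 1).
  rewrite <- (Cexpi_per (phi N n) q).
  f_equal. unfold th, phi. fold r. rewrite !plus_INR. simpl (INR 1).
  rewrite Hn. field. auto.
Qed.

Lemma Ntilde_eq N eps n :
  Ntilde N eps n =
  (RtoC (/ sqrt (normN N eps) * sqrt (INR (fact N)) / INR (N + 1)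
        * exp (eps ^ 2 / 2) / eps ^ N * (exp (- eps ^ 2 / 2) / sqrt (INR (fact n)) * eps ^ n))
   * sum_n (G:=C_AbelianMonoid) (fun k => Cpow (Cexpi (phi N n)) k) N)%C.
Proof.
  unfold Ntilde. rewrite RtoC_mult, <- Cmult_assoc. f_equal. rewrite <- sumC_scal.
  apply sum_n_ext. intro k. unfold coherent.
  rewrite Cmod_mult, Cmod_R, Cmod_Cexpi, Rmult_1_r, pow2_abs.
  rewrite Cpow_mult, Cpow_RtoC, Cexpi_pow, Cexpi_pow. rewrite <- angle. rewrite RtoC_mult. match goal with |- ?a = ?b => change (@eq C a b) end. ring.
Qed.

Lemma Cexpi_2PI : Cexpi (2*PI) = RtoC 1.
Proof. rewrite <- Cexpi_0, <- (Cexpi_per 0 1). f_equal. simpl. ring. Qed.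

Lemma sum_phi_N N n : (n mod (N+1) = N)%nat ->
  sum_n (G:=C_AbelianMonoid) (fun k => Cpow (Cexpi (phi N n)) k) N = RtoC (INR (N+1)).
Proof.
  intro H. unfold phi. rewrite H.
  replace (2 * PI * INR (N + 1) / INR (N + 1)) with (2*PI).
  - rewrite Cexpi_2PI, sum_one, Nat.add_1_r. reflexivity.
  - field. rewrite plus_INR. simpl. pose proof (pos_INR N). lra.
Qed.

Lemma sum_phi_0 N n : (n mod (N+1) <> N)%nat ->
  sum_n (G:=C_AbelianMonoid) (fun k => Cpow (Cexpi (phi N n)) k) N = RtoC 0.
Proof.
  intro H.
  assert (Hr := Nat.mod_upper_bound n (N+1)).
  set (r := (n mod (N+1))%nat) in *.
  assert (Hr' : (r + 1 <= N)%nat) by lia.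
  assert (HN : 0 < INR (N + 1)) by (apply lt_0_INR; lia).
  assert (HrN : INR (r+1) < INR (N+1)) by (apply lt_INR; lia).
  assert (Hr0 : 0 < INR (r+1)) by (apply lt_0_INR; lia).
  set (z := Cexpi (phi N n)).
  assert (Hz1 : Cpow z (S N) = RtoC 1).
  { unfold z. rewrite Cexpi_pow, <- Cexpi_0, <- (Cexpi_per 0 (r+1)). f_equal.
    unfold phi. fold r. rewrite <- Nat.add_1_r. field. lra. }
  assert (Hz : (z - 1)%C <> RtoC 0).
  { intro E. assert (E1 : fst z = 1).
    { assert (E2 := f_equal fst E). simpl in E2. unfold z, Cexpi; simpl; lra. }
    unfold z, Cexpi in E1. simpl in E1.
    replace (phi N n) with (2 * (PI * INR (r+1) / INR (N+1))) in E1
      by (unfold phi; fold r; field; lra).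
    rewrite cos_2a_sin in E1.
    assert (0 < sin (PI * INR (r + 1) / INR (N + 1))).
    { apply sin_gt_0.
      - apply Rdiv_lt_0_compat; [apply Rmult_lt_0_compat; [apply PI_RGT_0|lra]|lra].
      - apply Rmult_lt_reg_r with (INR (N+1)); [lra|].
        unfold Rdiv. rewrite Rmult_assoc, Rinv_l by lra.
        pose proof PI_RGT_0. nra. }
    nra. }
  assert (G := geom_sumC z N). rewrite Hz1 in G.
  set (S0 := sum_n _ N) in *.
  replace S0 with (/(z-1) * ((z-1) * S0))%C.
  - rewrite G. match goal with |- ?a = ?b => change (@eq C a b) end. ring.
  - field. auto.
Qed.

Definition T N eps k := eps ^ (2 * (k * (N + 1))) / INR (fact (k * (N + 1) + N)).

Lemma normN_T N eps : normN N eps = INR (fact N) * Series (T N eps).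
Proof. reflexivity. Qed.

Lemma pow2m_ge0 eps m : 0 <= eps ^ (2 * m).
Proof. rewrite pow_mult. apply pow_le. apply pow2_ge_0. Qed.

Lemma T_ge0 N eps k : 0 <= T N eps k.
Proof.
  unfold T. apply Rmult_le_pos. apply pow2m_ge0.
  apply Rlt_le, Rinv_0_lt_compat, INR_fact_lt_0.
Qed.

Lemma T_ex N eps : ex_series (T N eps).
Proof.
  set (y := eps ^ (2 * (N+1))).
  apply (@ex_series_le R_AbsRing R_CompleteNormedModule _ (fun k => / INR (fact k) * y ^ k)).
  - intro k. change (norm (T N eps k)) with (Rabs (T N eps k)).
    rewrite Rabs_pos_eq by apply T_ge0.
    unfold T. replace (2 * (k * (N+1)))%nat with (2 * (N+1) * k)%nat by lia.
    rewrite pow_mult. fold y. unfold Rdiv. rewrite (Rmult_comm (/ INR (fact k))).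
    apply Rmult_le_compat_l.
    + unfold y. apply pow_le, pow2m_ge0.
    + apply Rinv_le_contravar. apply INR_fact_lt_0.
      apply le_INR, fact_le. nia.
  - exists (exp y). apply is_pseries_R. apply is_exp_Reals.
Qed.

Lemma Series_ge0 (b : nat -> R) : (forall n, 0 <= b n) -> ex_series b -> 0 <= Series b.
Proof.
  intros Hb Hex.
  assert (H := Series_le (fun n => 0 * b n) b).
  rewrite Series_scal_l in H. rewrite Rmult_0_l in H. apply H; auto.
  intro n. rewrite Rmult_0_l. split; [lra| auto].
Qed.

Lemma T0 N eps : T N eps 0 = / INR (fact N).
Proof. unfold T. rewrite Nat.mul_0_l, Nat.mul_0_r, Nat.add_0_l. simpl. field. apply INR_fact_neq_0. Qed.

Lemma normN_ge1 N eps : normN N eps = 1 + INR (fact N) * Series (fun k => T N eps (S k)) /\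
   1 <= normN N eps.
Proof.
  assert (E : normN N eps = 1 + INR (fact N) * Series (fun k => T N eps (S k))).
  { rewrite normN_T, Series_incr_1 by apply T_ex. rewrite T0. field. apply INR_fact_neq_0. }
  split; auto. rewrite E.
  assert (0 <= Series (fun k => T N eps (S k))).
  { apply Series_ge0. intro; apply T_ge0. apply (ex_series_incr_1 (T N eps)). apply T_ex. }
  pose proof (INR_fact_lt_0 N). nra.
Qed.

Lemma a_val N eps n : eps <> 0 ->
  Cmod (Ntilde N eps n) ^ 2 =
  if Nat.eqb (n mod (N+1)) N then INR (fact N) / normN N eps * T N eps (n / (N+1)) else 0.
Proof.
  intro He. rewrite Ntilde_eq.
  destruct (Nat.eqb_spec (n mod (N+1)) N) as [H|H].
  - rewrite sum_phi_N by auto. rewrite <- RtoC_mult, Cmod_R, pow2_abs.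
    assert (Hd := Nat.div_mod_eq n (N+1)).
    set (q := (n / (N+1))%nat) in *. clearbody q.
    rewrite H in Hd. assert (Hn : n = (q * (N+1) + N)%nat) by lia. clear Hd H. subst n.
    set (m := (q * (N+1))%nat).
    unfold T. fold m.
    rewrite pow_add.
    replace (2 * m)%nat with (m * 2)%nat by lia. rewrite (pow_mult eps m 2).
    replace (- eps ^ 2 / 2) with (- (eps ^ 2 / 2)) by field. rewrite exp_Ropp.
    destruct (normN_ge1 N eps) as [_ Hge].
    pose proof (INR_fact_lt_0 N). pose proof (INR_fact_lt_0 (m+N)).
    assert (HN : 0 < INR (N + 1)) by (apply lt_0_INR; lia).
    assert (0 < exp (eps^2/2)) by apply exp_pos.
    assert (0 < sqrt (normN N eps)) by (apply sqrt_lt_R0; lra).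
    assert (0 < sqrt (INR (fact (m+N)))) by (apply sqrt_lt_R0; lra).
    assert (eps ^ N <> 0) by (apply pow_nonzero; auto).
    transitivity ((sqrt (INR (fact N)))^2 / (sqrt (normN N eps))^2 *
                  ((eps ^ m) ^ 2 / (sqrt (INR (fact (m+N))))^2)).
    + match goal with |- ?a = ?b => change (@eq R a b) end. field. repeat split; lra.
    + rewrite !pow2_sqrt by lra. reflexivity.
  - rewrite sum_phi_0 by auto. rewrite Cmult_0_r, Cmod_0. simpl. ring.
Qed.

Definition Bs (b : nat -> R) (j : nat) : R :=
  match j with 0%nat => 0 | S j' => sum_n b j' end.

Lemma sparse_series N (a b : nat -> R) (l : R) :
  (forall n, a n = if Nat.eqb (n mod (N+1)) N then b (n/(N+1))%nat else 0) ->
  is_series b l -> is_series a l.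
Proof.
  intros Ha Hb.
  assert (step : forall n, Bs b (S n / (N+1)) = Bs b (n/(N+1)) + a n).
  { intro n. rewrite Ha.
    assert (Hd := Nat.div_mod_eq n (N+1)).
    assert (Hr := Nat.mod_upper_bound n (N+1)).
    set (q := (n / (N+1))%nat) in *. set (r := (n mod (N+1))%nat) in *.
    destruct (Nat.eqb_spec r N) as [H|H].
    - replace (S n / (N+1))%nat with (S q).
      + destruct q as [|q]; simpl.
        * rewrite sum_O. ring.
        * rewrite sum_Sn. reflexivity.
      + apply Nat.div_unique with 0%nat; lia.
    - replace (S n / (N+1))%nat with q.
      + ring.
      + apply Nat.div_unique with (S r); lia. }
  assert (Hs : forall n, sum_n a n = Bs b (S n / (N+1))).
  { induction n as [|n IH].
    - rewrite sum_O, step, Nat.div_0_l by lia. simpl. ring.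
    - rewrite sum_Sn, IH, (step (S n)). reflexivity. }
  change (is_lim_seq (sum_n a) l).
  apply is_lim_seq_ext with (fun n => Bs b (S n / (N+1))).
  { intro n. symmetry. apply Hs. }
  apply (is_lim_seq_subseq (Bs b) l (fun n => S n / (N+1))%nat).
  - intros P [N0 HP]. exists (N0 * (N+1))%nat. intros n Hn. apply HP.
    apply Nat.div_le_lower_bound. lia. nia.
  - apply is_lim_seq_incr_1. exact Hb.
Qed.

Theorem corollary1 (N : nat) :
  (forall eps : R, eps <> 0 ->
     is_series (fun n => Cmod (Ntilde N eps n) ^ 2) 1 /\
     Cmod (Ntilde N eps N) ^ 2 = / normN N eps) /\
  (exists K delta : R, 0 < delta /\
     forall eps : R, eps <> 0 -> Rabs eps < delta ->
       Rabs (/ normN N eps - 1) <=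
         K * (INR (fact N) / INR (fact (2 * N + 1)) * eps ^ (2 * (N + 1)))).
Proof.
  split.
  - intros eps He.
    destruct (normN_ge1 N eps) as [_ Hge].
    pose proof (INR_fact_lt_0 N) as HfN.
    split.
    + apply (sparse_series N _ (fun q => INR (fact N) / normN N eps * T N eps q)).
      * intro n. apply a_val. auto.
      * replace 1 with (INR (fact N) / normN N eps * Series (T N eps)).
        -- apply (@is_series_scal_l R_AbsRing R_NormedModule). apply Series_correct, T_ex.
        -- assert (ES : Series (T N eps) = normN N eps / INR (fact N))
             by (rewrite normN_T; field; lra).
           rewrite ES. match goal with |- ?a = ?b => change (@eq R a b) end. field. lra.
    + rewrite a_val by auto.
      rewrite Nat.mod_small by lia. rewrite Nat.eqb_refl.
      rewrite Nat.div_small by lia. rewrite T0. field. split; lra.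
  - exists 2, (1/2). split; [lra|].
    intros eps He Heps.
    destruct (normN_ge1 N eps) as [E Hge].
    pose proof (INR_fact_lt_0 N) as HfN.
    set (y := eps ^ (2 * (N + 1))).
    set (D0 := INR (fact (2 * N + 1))).
    assert (HD0 : 0 < D0) by apply INR_fact_lt_0.
    assert (He2 : eps ^ 2 <= 1/4).
    { rewrite <- pow2_abs. pose proof (Rabs_pos eps). simpl. nra. }
    assert (Hy0 : 0 <= y) by apply pow2m_ge0.
    assert (Hy : y <= 1/2).
    { unfold y. rewrite pow_mult. rewrite Nat.add_1_r. simpl pow at 1. rewrite Rmult_1_r.
      idtac.
      assert ((eps * eps) ^ N <= 1).
      { rewrite <- (pow1 N). apply pow_incr. pose proof (pow2_ge_0 eps). simpl in *. nra. }
      assert (0 <= eps*eps) by nra.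
      simpl in He2. nra. }
    set (Sr := Series (fun k => T N eps (S k))).
    assert (HSr : Sr <= y / D0 * 2).
    { assert (G : is_series (fun k => (1/2) ^ k) 2).
      { assert (G0 : is_series (fun k => (1/2) ^ k) (/ (1 - 1/2))).
        { apply is_series_geom. rewrite Rabs_pos_eq; lra. }
        replace (/ (1 - 1/2)) with 2 in G0 by field. exact G0. }
      assert (Hex : ex_series (fun k => y / D0 * (1/2)^k)).
      { exists (y/D0 * 2). apply (@is_series_scal_l R_AbsRing R_NormedModule). exact G. }
      replace (y / D0 * 2) with (Series (fun k => y / D0 * (1/2)^k)).
      2:{ rewrite Series_scal_l. f_equal. apply is_series_unique. exact G. }
      apply Series_le; auto.
      intro k. split. apply T_ge0.
      unfold T.
      replace (2 * (S k * (N + 1)))%nat with (2 * (N+1) + 2 * (N+1) * k)%nat by lia.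
      rewrite pow_add, (pow_mult eps (2*(N+1)) k). fold y.
      assert (Hk : D0 <= INR (fact (S k * (N + 1) + N))).
      { apply le_INR, fact_le. nia. }
      assert (Hyk : y ^ k <= (1/2)^k) by (apply pow_incr; lra).
      assert (0 <= y ^ k) by (apply pow_le; lra).
      assert (/ INR (fact (S k * (N + 1) + N)) <= / D0) by (apply Rinv_le_contravar; lra).
      assert (0 < / INR (fact (S k * (N + 1) + N))) by (apply Rinv_0_lt_compat; lra).
      replace (y / D0 * (1/2)^k) with (y * (1/2)^k / D0) by (field; lra).
      unfold Rdiv.
      apply Rmult_le_compat; try nra. }
    assert (HSr0 : 0 <= Sr).
    { apply Series_ge0. intro; apply T_ge0. apply (ex_series_incr_1 (T N eps)). apply T_ex. }
    fold Sr in E.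
    assert (Hn1 : normN N eps - 1 <= 2 * (INR (fact N) / D0 * y)).
    { rewrite E. replace (2 * (INR (fact N) / D0 * y)) with (INR (fact N) * (y / D0 * 2))
        by (field; lra).
      assert (INR (fact N) * Sr <= INR (fact N) * (y / D0 * 2)) by (apply Rmult_le_compat_l; lra).
      lra. }
    rewrite Rabs_left1.
    2:{ assert (/ normN N eps <= 1). { rewrite <- Rinv_1. apply Rinv_le_contravar; lra. } lra. }
    assert (1 - / normN N eps <= normN N eps - 1).
    { assert (0 < / normN N eps) by (apply Rinv_0_lt_compat; lra).
      assert (normN N eps * / normN N eps = 1) by (field; lra).
      nra. }
    lra.
Qed.
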